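(* Let $G$ be a bipartite graph with colour classes of sizes $v$ and $w$, with $e$ edges, in which every vertex has degree at least $2$. Then the number of paths of length $3$ in $G$ is at least $e(e/v-1)(e/w-1)$, and this bound is attained exactly if all vertices of the first class have the same degree and all vertices of the second class have the same degree.
   Context: A path of length $3$ is a sequence of four distinct vertices $(x,y,z,t)$ with $\{x,y\},\{y,z\},\{z,t\}$ edges; a path and its reversal $(t,z,y,x)$ are counted as the same path (so the number of paths of length $3$ equals $\sum_{\{y,z\}\text{ edge}}(d(y)-1)(d(z)-1)$, $d$ denoting degree). *)

(* Defs.v *)
From HB Require Import structures.
From mathcomp Require Import all_boot all_order all_algebra.
Set Implicit Arguments. Unset Strict Implicit. Unset Printing Implicit Defensive.
Import Order.TTheory GRing.Theory Num.Theory.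

Definition simple_graph (T : finType) (g : rel T) : Prop :=
  symmetric g /\ irreflexive g.

(* A is one colour class of a bipartition: every edge has exactly one
   endpoint in A (the other class is ~: A). *)
Definition bipartition (T : finType) (g : rel T) (A : {set T}) : Prop :=
  forall x y, g x y -> (x \in A) != (y \in A).

Definition deg (T : finType) (g : rel T) (x : T) : nat := #|[set y | g x y]|.

Definition nedges (T : finType) (g : rel T) : nat :=
  #|[set E : {set T} | [exists x, exists y, g x y && (E == [set x; y])]]|.

Definition is_path3 (T : finType) (g : rel T) (x y z t : T) : bool :=
  [&& uniq [:: x; y; z; t], g x y, g y z & g z t].

(* number of paths of length 3, a path and its reversal counted once:
   the ordered paths come in reversal pairs (p <> rev p since vertices are
   distinct), so we halve the number of ordered ones. *)
Definition npaths3 (T : finType) (g : rel T) : nat :=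
  #|[set p : T * T * T * T | is_path3 g p.1.1.1 p.1.1.2 p.1.2 p.2]| %/ 2.

(* Main.v *)
Require Import Defs.
From HB Require Import structures.
From mathcomp Require Import all_boot all_order all_algebra.
From mathcomp Require Import lra ring.
From mathcomp Require Import Rstruct.
From mathcomp Require Import boolp classical_sets reals topology normedtype sequences derive realfun exp.
Set Implicit Arguments. Unset Strict Implicit. Unset Printing Implicit Defensive.
Import Order.TTheory GRing.Theory Num.Theory.
Import numFieldNormedType.Exports.
Local Open Scope ring_scope.
Local Open Scope classical_set_scope.


Lemma ln_lt_sub1 (R : realType) (x : R) : 0 < x -> x != 1 -> ln x < x - 1.
Proof.
move=> x0 x1.
set s := Num.sqrt x.
have s0 : 0 < s by rewrite sqrtr_gt0.
have ss : s * s = x by rewrite -expr2 sqr_sqrtr // ltW.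
have s1 : s != 1 by apply: contra x1 => /eqP h; rewrite -ss h mulr1.
have hl : ln x = ln s *+ 2 by rewrite -lnXn // expr2 ss.
have : ln s <= s - 1.
  have := @le_ln1Dx R (s - 1); rewrite addrCA subrr addr0; apply.
  lra.
move=> h; rewrite hl -ss.
have hp : 0 < (s - 1) ^+ 2 by rewrite lt_def sqr_ge0 andbT sqrf_eq0 subr_eq0.
rewrite mulr2n; rewrite expr2 in hp; nra.
Qed.

Definition f (R : realType) (m : R) := fun x : R => (m * x + 1) * ln x - (m + 1) * (x - 1).
Definition df (R : realType) (m : R) := fun x : R => m * ln x + (m * x + 1) / x - (m + 1).

Lemma f_der (R : realType) (m x : R) : 0 < x -> is_derive x 1 (f m) (df m x).
Proof.
move=> x0.
have hl := is_derive1_ln x0.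
rewrite /f /df.
apply: is_derive_eq.
rewrite !subr0 addr0 scaler1 /GRing.scale /= mulr1.
rewrite mulrC; ring.
Qed.

Lemma f1 (R : realType) (m : R) : f m 1 = 0.
Proof. by rewrite /f ln1 mulr0 subrr mulr0 subrr. Qed.

Lemma dfE (R : realType) (m x : R) : 0 < x -> x * df m x = m * x * ln x + 1 - x.
Proof.
move=> x0; rewrite /df; field; by rewrite gt_eqF.
Qed.

Lemma f_cont (R : realType) (m a b : R) : 0 < a -> {within `[a, b], continuous (f m)}.
Proof.
move=> a0; apply: derivable_within_continuous => x.
rewrite in_itv /= => /andP[ax _].
have := f_der m (lt_le_trans a0 ax); by case.
Qed.

Lemma psi_pos (R : realType) (m t : R) : 1 <= m -> m^-1 <= t -> t != 1 -> 0 < f m t.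
Proof.
move=> m1 mt t1.
have m0 : 0 < m by lra.
have t0 : 0 < t by apply: lt_le_trans mt; rewrite invr_gt0.
have mt1 : 1 <= m * t.
  by have := ler_wpM2l (ltW m0) mt; rewrite mulfV ?lt0r_neq0.
case: (ltgtP t 1) t1 => // [tlt|tgt] _.
- have hder : forall x, x \in `]t, 1[%R -> is_derive x 1 (f m) (df m x).
    by move=> x; rewrite in_itv /= => /andP[tx _]; apply: f_der; lra.
  have [c cI eq] := MVT tlt hder (f_cont (m:=m) (b:=1) t0).
  move: cI; rewrite in_itv /= => /andP[tc c1].
  have c0 : 0 < c by lra.
  have hl := ln_lt_sub1 c0 (negbT (lt_eqF c1)).
  have hn : ln c < 0 by apply: ln_lt0; rewrite c0 c1.
  have mc : 1 <= m * c by nra.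
  have := dfE m c0.
  move: eq; rewrite f1 sub0r => eq.
  have hd : c * df m c < 0 by rewrite dfE //; nra.
  have hd' : df m c < 0 by nra.
  nra.
- have hder : forall x, x \in `]1, t[%R -> is_derive x 1 (f m) (df m x).
    by move=> x; rewrite in_itv /= => /andP[tx _]; apply: f_der; lra.
  have [c cI eq] := MVT tgt hder (f_cont (m:=m) (b:=t) ltr01).
  move: cI; rewrite in_itv /= => /andP[c1 ct].
  have c0 : 0 < c by lra.
  have ci : c^-1 != 1 by rewrite lt_eqF // invf_lt1.
  have ci0 : 0 < c^-1 by rewrite invr_gt0.
  have hl := ln_lt_sub1 ci0 ci.
  rewrite lnV ?posrE // in hl.
  have hp : 0 < ln c by apply: ln_gt0.
  have hd : 0 < c * df m c.
    rewrite dfE //.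
    have : c * (- ln c) < c * (c^-1 - 1) by rewrite ltr_pM2l.
    rewrite mulrBr mulfV ?gt_eqF // mulr1; nra.
  have hd' : 0 < df m c by nra.
  move: eq; rewrite f1 subr0 => ->; nra.
Qed.

Lemma f_eq (R : realType) (m u d : R) : 1 <= m -> 1 <= u -> d = u + 1 ->
  f m (u / m) = d * ln u - d * ln m - (m + 1) / m * (u - m).
Proof.
move=> m1 u1 ->; have m0 : 0 < m by lra.
have u0 : 0 < u by lra.
rewrite /f ln_div ?posrE //.
rewrite mulrCA divff ?lt0r_neq0 // mulr1; field; exact: lt0r_neq0.
Qed.

Lemma jensen (R : realType) (I : finType) (S : {pred I}) (d : I -> nat) :
  (0 < #|S|)%N -> (forall i, i \in S -> (2 <= d i)%N) ->
  let m : R := (\sum_(i in S) d i)%:R / #|S|%:R - 1 in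
  m ^+ (\sum_(i in S) d i) <= \prod_(i in S) ((d i)%:R - 1) ^+ (d i)
  /\ (m ^+ (\sum_(i in S) d i) = \prod_(i in S) ((d i)%:R - 1) ^+ (d i) ->
      forall i j, i \in S -> j \in S -> d i = d j).
Proof.
move=> k0 d2 m.
set N := (\sum_(i in S) d i)%N.
set k := #|S|.
pose u i : R := (d i)%:R - 1.
have u1 i : i \in S -> 1 <= u i.
  move=> /d2 h; rewrite /u lerBrDr -[1 + 1]/(2%:R) ler_nat //.
have k0' : (k%:R : R) != 0 by rewrite pnatr_eq0 -lt0n.
have sumu : \sum_(i in S) u i = N%:R - k%:R.
  by rewrite /u sumrB natr_sum sumr_const.
have sumum : \sum_(i in S) (u i - m) = 0.
  rewrite sumrB sumu sumr_const /m.
  by rewrite -mulr_natr; field.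
have kpos : (0 : R) < k%:R by rewrite ltr0n.
have mk : m * k%:R = \sum_(i in S) u i by rewrite sumu /m; field.
have m1 : 1 <= m.
  have : \sum_(i in S) (1 : R) <= \sum_(i in S) u i by apply: ler_sum => i /u1.
  rewrite sumr_const -/k -mk => h; rewrite -(ler_pM2r kpos) mul1r.
  by rewrite -[X in X <= _]mul1r mulr_natr.
have m0 : 0 < m by lra.
pose D i := f m (u i / m).
have Dge i : i \in S -> 0 <= D i /\ (D i = 0 -> u i = m).
  move=> iS; have ui := u1 i iS.
  have [e|ne] := eqVneq (u i / m) 1.
    split; first by rewrite /D e f1.
    by move=> _; move: e => /eqP; rewrite (can2_eq (divfK (lt0r_neq0 m0)) (mulfK (lt0r_neq0 m0))) mul1r => /eqP.
  have hp : 0 < D i.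
    apply: psi_pos => //.
    by rewrite -[X in X <= _]mul1r ler_pM2r ?invr_gt0.
  by split; [exact: ltW | move=> h; move: hp; rewrite h ltxx].
have sumD : \sum_(i in S) D i = \sum_(i in S) (d i)%:R * ln (u i) - N%:R * ln m.
  rewrite (eq_bigr (fun i => (d i)%:R * ln (u i) - (d i)%:R * ln m - (m + 1) / m * (u i - m))); last first.
    by move=> i iS; rewrite /D (f_eq (d := (d i)%:R) m1 (u1 i iS)) // /u subrK.
  rewrite !sumrB -mulr_sumr sumum mulr0 subr0 -mulr_suml natr_sum //.
set L := \sum_(i in S) (d i)%:R * ln (u i).
have eR : \prod_(i in S) ((d i)%:R - 1) ^+ (d i) = expR L.
  rewrite /L expR_sum; apply: eq_bigr => i iS.
  by rewrite expRM_natl lnK // posrE; have := u1 i iS; rewrite /u; lra.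
have eL : m ^+ N = expR (N%:R * ln m) by rewrite expRM_natl lnK // posrE.
rewrite eR eL; split.
  rewrite ler_expR -subr_ge0 -sumD; apply: sumr_ge0 => i iS; exact: (Dge i iS).1.
move=> /expR_inj /eqP; rewrite eq_sym -subr_eq0 -sumD => /eqP hs.
have hD := psumr_eq0P (fun i iS => (Dge i iS).1) hs.
have hu i : i \in S -> (d i)%:R = m + 1 :> R.
  by move=> iS; rewrite -((Dge i iS).2 (hD i iS)) /u subrK.
move=> i j iS jS; apply/eqP; rewrite -(eqr_nat R) hu // hu //.
Qed.

Lemma jensen_rat (I : finType) (S : {pred I}) (d : I -> nat) :
  (0 < #|S|)%N -> (forall i, i \in S -> (2 <= d i)%N) ->
  let m : rat := (\sum_(i in S) d i)%:R / #|S|%:R - 1 in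
  m ^+ (\sum_(i in S) d i) <= \prod_(i in S) ((d i)%:R - 1) ^+ (d i)
  /\ (m ^+ (\sum_(i in S) d i) = \prod_(i in S) ((d i)%:R - 1) ^+ (d i) ->
      forall i j, i \in S -> j \in S -> d i = d j).
Proof.
move=> k0 d2 m.
have [h1 h2] := @jensen Rdefinitions.R _ _ _ k0 d2.
have hm : ratr m = (\sum_(i in S) d i)%:R / #|S|%:R - 1 :> Rdefinitions.R.
  by rewrite /m rmorphB fmorph_div /= !rmorph_nat rmorph1.
have hp : ratr (\prod_(i in S) ((d i)%:R - 1) ^+ (d i) : rat)
    = \prod_(i in S) ((d i)%:R - 1) ^+ (d i) :> Rdefinitions.R.
  rewrite rmorph_prod; apply: eq_bigr => i _.
  by rewrite rmorphXn rmorphB /= rmorph_nat rmorph1.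
split.
  by rewrite -(ler_rat Rdefinitions.R) hp rmorphXn /= hm.
move=> e; apply: h2.
by rewrite -hm -hp; move: e => /(congr1 (@ratr Rdefinitions.R)); rewrite rmorphXn.
Qed.

Local Close Scope classical_set_scope.
Definition Eset (T : finType) (g : rel T) (A : {set T}) :=
  [set p : T * T | (p.1 \in A) && g p.1 p.2].

Lemma bigE_A (R : Type) (idx : R) (op : Monoid.com_law idx) (T : finType)
  (g : rel T) (A : {set T}) (F : T -> T -> R) :
  \big[op/idx]_(p in Eset g A) F p.1 p.2 = \big[op/idx]_(y in A) \big[op/idx]_(z | g y z) F y z.
Proof. by rewrite pair_big_dep; apply: eq_bigl => p; rewrite inE. Qed.

Lemma bigE_B (R : Type) (idx : R) (op : Monoid.com_law idx) (T : finType)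
  (g : rel T) (A : {set T}) (F : T -> T -> R) :
  symmetric g -> bipartition g A ->
  \big[op/idx]_(p in Eset g A) F p.1 p.2 = \big[op/idx]_(z in ~: A) \big[op/idx]_(y | g z y) F y z.
Proof.
move=> Hs HA; rewrite pair_big_dep.
have sw : injective (fun q : T * T => (q.2, q.1)) by case=> a b [c d] /= [-> ->].
rewrite (reindex_inj sw) /=; apply: eq_bigl => [[a b]] /=.
rewrite inE /= finset.in_setC (Hs a b); case G: (g b a); rewrite ?andbF ?andbT //.
by move: (HA _ _ G); case: (a \in A); case: (b \in A).
Qed.

Lemma path3E (T : finType) (g : rel T) (A : {set T}) x y z t :
  simple_graph g -> bipartition g A ->
  is_path3 g x y z t = [&& g y z, g x y && (x != z) & g z t && (t != y)].
Proof.
move=> [Hs Hi] HA.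
have bA a b : g a b -> (a \in A) = ~~ (b \in A).
  by move/HA; case: (a \in A); case: (b \in A).
have neq a b : g a b -> (a == b) = false.
  by move=> G; apply/negbTE; apply: contraTneq G => ->; rewrite Hi.
rewrite /is_path3 /= !inE.
case Gxy: (g x y); case Gyz : (g y z); case Gzt: (g z t); rewrite /= ?andbF //=.
rewrite (neq _ _ Gxy) (neq _ _ Gyz) (neq _ _ Gzt) /=.
have -> : (x == t) = false.
  apply/negbTE/eqP => e; subst t.
  by move: (bA _ _ Gxy) (bA _ _ Gyz) (bA _ _ Gzt); case: (x \in A); case: (y \in A); case: (z \in A).
by rewrite orbF !andbT [t == y]eq_sym.
Qed.

Lemma sum_indic2 (T : finType) (P Q : pred T) :
  \sum_(x : T) \sum_(t : T) (if P x && Q t then 1 else 0)%N = (#|P| * #|Q|)%N.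
Proof.
have e x t : (if P x && Q t then 1 else 0)%N = (P x * Q t)%N by case: (P x); case: (Q t).
under eq_bigr => x _ do under eq_bigr => t _ do rewrite e.
under eq_bigr => x _ do rewrite -big_distrr /=.
rewrite -big_distrl /=.
have c (R : pred T) : (\sum_(x : T) (R x : nat))%N = #|R|.
  by rewrite -sum1_card [RHS]big_mkcond; apply: eq_bigr => x _; rewrite unfold_in; case: (R x).
by rewrite !c.
Qed.

Lemma card_nbr_but (T : finType) (g : rel T) y z :
  symmetric g -> g y z -> #|[pred x | g x y && (x != z)]| = (deg g y).-1.
Proof.
move=> Hs G; rewrite /deg (cardsD1 z) inE G /=.
by apply: eq_card => x; rewrite !inE Hs andbC.
Qed.

Lemma card_paths (T : finType) (g : rel T) (A : {set T}) :
  simple_graph g -> bipartition g A ->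
  #|[set p : T * T * T * T | is_path3 g p.1.1.1 p.1.1.2 p.1.2 p.2]| =
  (\sum_(y : T) \sum_(z | g y z) (deg g y).-1 * (deg g z).-1)%N.
Proof.
move=> Hg HA; have [Hs Hi] := Hg.
rewrite -sum1_card.
rewrite (eq_bigl (fun p : T * T * T * T => is_path3 g p.1.1.1 p.1.1.2 p.1.2 p.2)); last by move=> p; rewrite inE.
rewrite big_mkcond /=.
have -> : (\sum_(p : T * T * T * T) (if is_path3 g p.1.1.1 p.1.1.2 p.1.2 p.2 then 1 else 0) =
   \sum_x \sum_y \sum_z \sum_t (if is_path3 g x y z t then 1 else 0))%N by rewrite !pair_big.
rewrite exchange_big /=; apply: eq_bigr => y _.
rewrite exchange_big /= [RHS]big_mkcond /=; apply: eq_bigr => z _.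
under eq_bigr => x _ do under eq_bigr => t _ do rewrite (@path3E _ _ A) //.
case G: (g y z); last first.
  by rewrite big1 // => x _; rewrite big1.
rewrite (sum_indic2 (fun x => g x y && (x != z)) (fun t => g z t && (t != y))).
rewrite (card_nbr_but Hs G); congr (_ * _)%N.
have G' : g z y by rewrite Hs.
rewrite -(card_nbr_but Hs G'); apply: eq_card => t; rewrite !inE Hs.
by [].
Qed.

Lemma sum_splitA (T : finType) (A : {set T}) (G : T -> nat) :
  (\sum_(y : T) G y = \sum_(y in A) G y + \sum_(y in ~: A) G y)%N.
Proof.
rewrite (bigID (mem A)) /=; congr (_ + _); apply: eq_bigl => y; by rewrite ?inE.
Qed.

Lemma npathsE (T : finType) (g : rel T) (A : {set T}) :
  simple_graph g -> bipartition g A ->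
  npaths3 g = (\sum_(p in Eset g A) (deg g p.1).-1 * (deg g p.2).-1)%N.
Proof.
move=> Hg HA; have [Hs Hi] := Hg.
rewrite /npaths3 (@card_paths _ _ A) // (sum_splitA A).
rewrite -(@bigE_A _ _ _ _ g A (fun y z => (deg g y).-1 * (deg g z).-1)%N).
rewrite -(@bigE_B _ _ _ _ g A (fun y z => (deg g z).-1 * (deg g y).-1)%N) //.
under [X in (_ + X)%N]eq_bigr => p _ do rewrite mulnC.
by rewrite addnn -mul2n mulKn.
Qed.

Lemma nedgesE (T : finType) (g : rel T) (A : {set T}) :
  simple_graph g -> bipartition g A -> nedges g = #|Eset g A|.
Proof.
move=> [Hs Hi] HA.
have bA a b : g a b -> (a \in A) = ~~ (b \in A).
  by move/HA; case: (a \in A); case: (b \in A).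
rewrite /nedges -(@card_in_imset _ _ (fun p : T * T => [set p.1; p.2])).
  apply: eq_card => S; rewrite [in LHS]inE; apply/existsP/imsetP.
    move=> [x /existsP [y /andP [G /eqP ->]]].
    case xA: (x \in A).
      by exists (x, y); rewrite // inE xA G.
    exists (y, x); last by rewrite /= finset.setUC.
    by rewrite inE /= Hs G andbT -[y \in A]negbK -(bA _ _ G) xA.
  move=> [[x y]]; rewrite inE /= => /andP [xA G] ->.
  by exists x; apply/existsP; exists y; rewrite G eqxx.
move=> [a b] [c d]; rewrite !inE /= => /andP [aA Gab] /andP [cA Gcd] e.
have bA' : b \notin A by rewrite -(bA _ _ Gab).
have dA' : d \notin A by rewrite -(bA _ _ Gcd).
have : a \in [set c; d] by rewrite -e !inE eqxx.
rewrite !inE => /orP [/eqP eac|/eqP ead]; last by move: dA'; rewrite -ead aA.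
subst c.
have : b \in [set a; d] by rewrite -e !inE eqxx orbT.
rewrite !inE => /orP [/eqP eba|/eqP ebd]; last by rewrite ebd.
by move: bA'; rewrite eba aA.
Qed.

Lemma cardE_A (T : finType) (g : rel T) (A : {set T}) :
  #|Eset g A| = (\sum_(y in A) deg g y)%N.
Proof.
rewrite -sum1_card (@bigE_A _ _ _ _ g A (fun _ _ => 1%N)).
by apply: eq_bigr => y _; rewrite sum1dep_card.
Qed.

Lemma cardE_B (T : finType) (g : rel T) (A : {set T}) :
  symmetric g -> bipartition g A ->
  #|Eset g A| = (\sum_(z in ~: A) deg g z)%N.
Proof.
move=> Hs HA.
rewrite -sum1_card (@bigE_B _ _ _ _ g A (fun _ _ => 1%N)) //.
by apply: eq_bigr => y _; rewrite sum1dep_card.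
Qed.

Lemma prodE_A (R : comRingType) (T : finType) (g : rel T) (A : {set T}) (a : T -> R) :
  \prod_(p in Eset g A) a p.1 = \prod_(y in A) a y ^+ deg g y.
Proof.
rewrite (@bigE_A _ _ _ _ g A (fun y _ => a y)).
apply: eq_bigr => y _; rewrite -prodr_const; apply: eq_bigl => z; by rewrite inE.
Qed.

Lemma prodE_B (R : comRingType) (T : finType) (g : rel T) (A : {set T}) (a : T -> R) :
  symmetric g -> bipartition g A ->
  \prod_(p in Eset g A) a p.2 = \prod_(z in ~: A) a z ^+ deg g z.
Proof.
move=> Hs HA.
rewrite (@bigE_B _ _ _ _ g A (fun _ z => a z)) //.
apply: eq_bigr => y _; rewrite -prodr_const; apply: eq_bigl => z; by rewrite inE.
Qed.

Lemma natr_predn (k : nat) : (0 < k)%N -> (k.-1)%:R = k%:R - 1 :> rat.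
Proof. by case: k => // k _; rewrite /= -natr1 addrK. Qed.

Unset Implicit Arguments.

Theorem corollary4p6 (T : finType) (g : rel T) (A : {set T})
  (Hg : simple_graph g) (HA : bipartition g A)
  (Hdeg : forall x : T, (2 <= deg g x)%N) :
  let v : rat := (#|A|)%:R in
  let w : rat := (#|~: A|)%:R in
  let e : rat := (nedges g)%:R in
  e * (e / v - 1) * (e / w - 1) <= (npaths3 g)%:R /\
  ((npaths3 g)%:R = e * (e / v - 1) * (e / w - 1) <->
     (forall x y, x \in A -> y \in A -> deg g x = deg g y) /\
     (forall x y, x \notin A -> y \notin A -> deg g x = deg g y)).
Proof.
move=> v w e.
have [Hs Hi] := Hg.
set E := Eset g A.
set n := #|E|.
have en : e = n%:R by rewrite /e (nedgesE Hg HA).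
pose a x : rat := (deg g x)%:R - 1.
have a1 x : 1 <= a x.
  by rewrite /a lerBrDr -[1 + 1]/(2%:R) ler_nat.
have hPr : (npaths3 g)%:R = \sum_(p in E) a p.1 * a p.2 :> rat.
  rewrite (npathsE Hg HA) natr_sum; apply: eq_bigr => p _.
  by rewrite natrM !natr_predn // (leq_trans _ (Hdeg _)).
rewrite -/E in hPr.
rewrite en /v /w.
case: (posnP n) => [n0|npos].
  have nT : T -> False.
    move=> x; have := Hdeg x; rewrite /deg => h.
    have [y] : exists y, y \in [set y | g x y].
      by apply/card_gt0P; apply: leq_trans h.
    rewrite inE => Gy.
    have : (0 < n)%N.
      rewrite /n card_gt0; apply/set0Pn.
      case xA : (x \in A).
        by exists (x, y); rewrite inE xA Gy.
      exists (y, x); rewrite inE /= Hs Gy andbT.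
      by move: (HA _ _ Gy); rewrite xA; case: (y \in A).
    by rewrite n0.
  have P0 : (npaths3 g)%:R = 0 :> rat by rewrite hPr big1 // => p; case: (nT p.1).
  rewrite n0 P0 !mul0r; split; first exact: lexx.
  split => _; last by [].
  by split => x; case: (nT x).
have [p0 p0E] : exists p, p \in E by apply/card_gt0P.
have [p0A Gp0] : p0.1 \in A /\ g p0.1 p0.2 by move: p0E; rewrite inE => /andP.
have p0B : p0.2 \in ~: A.
  by rewrite finset.in_setC; move: (HA _ _ Gp0); rewrite p0A.
have vpos : (0 < #|A|)%N by apply/card_gt0P; exists p0.1.
have wpos : (0 < #|~: A|)%N by apply/card_gt0P; exists p0.2.
have nA : n = (\sum_(y in A) deg g y)%N by rewrite /n cardE_A.
have nB : n = (\sum_(z in ~: A) deg g z)%N by rewrite /n cardE_B.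
have [JA1 JA2] := jensen_rat vpos (fun i _ => Hdeg i).
have [JB1 JB2] := jensen_rat wpos (fun i _ => Hdeg i).
rewrite -nA in JA1 JA2; rewrite -nB in JB1 JB2.
set mA := n%:R / #|A|%:R - 1 in JA1 JA2 *.
set mB := n%:R / #|~: A|%:R - 1 in JB1 JB2 *.
set XA := \prod_(i in A) _ in JA1 JA2.
set XB := \prod_(i in ~: A) _ in JB1 JB2.
have hXA : XA = \prod_(y in A) a y ^+ deg g y by [].
have hXB : XB = \prod_(y in ~: A) a y ^+ deg g y by [].
have vr : (0 : rat) < #|A|%:R by rewrite ltr0n.
have wr : (0 : rat) < #|~: A|%:R by rewrite ltr0n.
have nr : (0 : rat) < n%:R by rewrite ltr0n.
have mA1 : 1 <= mA.
  rewrite /mA lerBrDr ler_pdivlMr // -[1 + 1]/(2%:R) -natrM ler_nat nA.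
  rewrite mulnC -sum_nat_const; exact: leq_sum.
have mB1 : 1 <= mB.
  rewrite /mB lerBrDr ler_pdivlMr // -[1 + 1]/(2%:R) -natrM ler_nat nB.
  rewrite mulnC -sum_nat_const; exact: leq_sum.
have hprod : \prod_(p in E) (a p.1 * a p.2) = XA * XB.
  by rewrite big_split /= (prodE_A g A a) (prodE_B a Hs HA).
have AGM : \prod_(p in E) (a p.1 * a p.2) <= ((npaths3 g)%:R / n%:R) ^+ n.
  have Hnn : {in mem E, forall p, 0 <= a p.1 * a p.2}.
    by move=> p _; apply: mulr_ge0; apply: le_trans (a1 _).
  have h := @leif_AGM rat _ (mem E) (fun p => a p.1 * a p.2) Hnn.
  rewrite hPr; exact: h.1.
rewrite hprod in AGM.
have XA0 : 0 < XA by apply: lt_le_trans JA1; apply: exprn_gt0; lra.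
have XB0 : 0 < XB by apply: lt_le_trans JB1; apply: exprn_gt0; lra.
have mm : (mA * mB) ^+ n <= XA * XB.
  by rewrite exprMn; apply: ler_pM => //; apply: exprn_ge0; lra.
have P0 : 0 <= (npaths3 g)%:R / n%:R :> rat by rewrite divr_ge0 // ler0n.
have key : mA * mB <= (npaths3 g)%:R / n%:R.
  rewrite -(ler_pXn2r npos) ?nnegrE //; last by apply: mulr_ge0; lra.
  exact: le_trans AGM.
split.
  by rewrite -mulrA mulrC -ler_pdivlMr.
split.
  move=> heq.
  have e1 : (npaths3 g)%:R / n%:R = mA * mB by rewrite heq -mulrA mulrC mulKf // lt0r_neq0.
  rewrite e1 exprMn in AGM.
  have ea : XA = mA ^+ n.
    apply/eqP; rewrite eq_le JA1 andbT.
    have hb : 0 < mB ^+ n by apply: exprn_gt0; lra.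
    rewrite -(ler_pM2r hb); apply: le_trans AGM; apply: ler_wpM2l => //; exact: ltW.
  have eb : XB = mB ^+ n.
    apply/eqP; rewrite eq_le JB1 andbT.
    have ha : 0 < mA ^+ n by apply: exprn_gt0; lra.
    rewrite -(ler_pM2l ha); apply: le_trans AGM; apply: ler_wpM2r => //; exact: ltW.
  split; first by apply: JA2.
  move=> x y xA yA; apply: JB2 => //; by rewrite finset.in_setC.
move=> [CA CB].
set da := deg g p0.1.
set db := deg g p0.2.
have nA' : n = (#|A| * da)%N.
  rewrite nA -sum_nat_const; apply: eq_bigr => y yA; exact: CA.
have nB' : n = (#|~: A| * db)%N.
  rewrite nB -sum_nat_const; apply: eq_bigr => y yA; apply: CB; by rewrite -finset.in_setC.
have emA : mA = a p0.1.
  rewrite /mA nA' natrM [X in X / _]mulrC mulfK ?lt0r_neq0 //.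
have emB : mB = a p0.2.
  rewrite /mB nB' natrM [X in X / _]mulrC mulfK ?lt0r_neq0 //.
rewrite hPr emA emB.
rewrite (eq_bigr (fun _ => a p0.1 * a p0.2)); last first.
  move=> p; rewrite inE => /andP [pA Gp].
  have pB : p.2 \notin A by move: (HA _ _ Gp); rewrite pA.
  rewrite /a (CA p.1 p0.1) // (CB p.2 p0.2) //; by rewrite -finset.in_setC.
by rewrite sumr_const -/n -mulrA mulr_natl.
Qed.
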